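(* Let $X$ be a super $X$-set parameter, let $G$ be a graph, and let $R\subseteq V(G)$. Define $\nu_R$ on the $X$-sets of $G$ by $\nu_R(S)=S\ominus R$. Then $\nu_R$ is a graph automorphism of $\mathfrak{X}(G)$ if and only if $R$ is $X$-irrelevant.
   Context: All graphs are finite, simple, undirected, with nonempty vertex set. A super $X$-set parameter $X$ assigns to each graph $G$ a family of subsets of $V(G)$, called the $X$-sets of $G$, such that: every graph isomorphism maps $X$-sets to $X$-sets; every graph has at least one $X$-set; and (Superset) if $S$ is an $X$-set of $G$ and $S\subseteq S'\subseteq V(G)$, then $S'$ is an $X$-set of $G$. The $X$-TAR graph $\mathfrak{X}(G)$ has as vertices the $X$-sets of $G$, with $S_1S_2$ an edge iff $|S_1\ominus S_2|=1$; $\ominus$ is symmetric difference. A vertex $v$ is $X$-irrelevant if $v$ belongs to no minimal (w.r.t. inclusion) $X$-set of $G$; a set $R$ is $X$-irrelevant if each of its vertices is. *)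

(* Defs.v *)
From mathcomp Require Import all_boot.
Set Implicit Arguments. Unset Strict Implicit. Unset Printing Implicit Defensive.

Definition simple_graph (T : finType) (e : rel T) : Prop :=
  irreflexive e /\ symmetric e /\ 0 < #|T|.

Definition graph_param := forall (T : finType), rel T -> {set T} -> Prop.

Definition graph_iso (T1 T2 : finType) (e1 : rel T1) (e2 : rel T2)
  (f : T1 -> T2) : Prop :=
  bijective f /\ forall x y, e2 (f x) (f y) = e1 x y.

Definition super_X_param (X : graph_param) : Prop :=
  (forall (T1 T2 : finType) (e1 : rel T1) (e2 : rel T2) (f : T1 -> T2),
      simple_graph e1 -> simple_graph e2 -> graph_iso e1 e2 f ->
      forall S : {set T1}, X T1 e1 S -> X T2 e2 (f @: S)) /\
  (forall (T : finType) (e : rel T), simple_graph e ->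
      exists S : {set T}, X T e S) /\
  (forall (T : finType) (e : rel T), simple_graph e ->
      forall S S' : {set T}, X T e S -> S \subset S' -> X T e S').

Definition symdiff (T : finType) (A B : {set T}) : {set T} :=
  (A :\: B) :|: (B :\: A).

Definition tar_adj (T : finType) (S1 S2 : {set T}) : Prop :=
  #|symdiff S1 S2| = 1.

Definition tar_automorphism (X : graph_param) (T : finType) (e : rel T)
  (f : {set T} -> {set T}) : Prop :=
  (forall S, X T e S -> X T e (f S)) /\
  (forall S1 S2, X T e S1 -> X T e S2 -> f S1 = f S2 -> S1 = S2) /\
  (forall S2, X T e S2 -> exists2 S1, X T e S1 & f S1 = S2) /\
  (forall S1 S2, X T e S1 -> X T e S2 ->
      (tar_adj (f S1) (f S2) <-> tar_adj S1 S2)).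

Definition minimal_X_set (X : graph_param) (T : finType) (e : rel T)
  (S : {set T}) : Prop :=
  X T e S /\ forall S' : {set T}, S' \proper S -> ~ X T e S'.

Definition X_irrelevant_vertex (X : graph_param) (T : finType) (e : rel T)
  (v : T) : Prop :=
  forall S : {set T}, minimal_X_set X e S -> v \notin S.

Definition X_irrelevant (X : graph_param) (T : finType) (e : rel T)
  (R : {set T}) : Prop :=
  forall v, v \in R -> X_irrelevant_vertex X e v.

(* Main.v *)
Require Import Defs.
From mathcomp Require Import all_boot.
From Stdlib Require Import Classical.

Lemma symdiffK (T : finType) (S R : {set T}) : symdiff (symdiff S R) R = S.
Proof.
apply/setP => x; rewrite /symdiff !inE.
by case: (x \in S); case: (x \in R).
Qed.

Lemma symdiff2 (T : finType) (A B R : {set T}) :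
  symdiff (symdiff A R) (symdiff B R) = symdiff A B.
Proof.
apply/setP => x; rewrite /symdiff !inE.
by case: (x \in A); case: (x \in B); case: (x \in R).
Qed.

Lemma ex_minimal (X : graph_param) (T : finType) (e : rel T) :
  forall n (S : {set T}), #|S| <= n -> X T e S ->
    exists M, minimal_X_set X e M /\ M \subset S.
Proof.
elim=> [|n IH] S hS hX.
  exists S; split; last by [].
  split=> // S' /proper_card; move: hS; rewrite leqn0 => /eqP ->.
  by rewrite ltn0.
destruct (classic (exists S' : {set T}, S' \proper S /\ X T e S')) as [[S' [hp hX']]|hn].
  have [M [hM hMS]] := IH S' (leq_trans (proper_card hp) hS) hX'.
  exists M; split=> //; apply: subset_trans hMS (proper_sub hp).
exists S; split=> //; split=> // S' hp hX'; apply: hn; by exists S'.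
Qed.

Theorem theorem2p23 (X : graph_param) (hX : super_X_param X)
  (T : finType) (e : rel T) (hG : simple_graph e) (R : {set T}) :
  tar_automorphism X e (fun S => symdiff S R) <-> X_irrelevant X e R.
Proof.
have [_ [_ hsup]] := hX.
have hsup' := hsup T e hG.
split.
- move=> [hcl _] v hvR M [hM hmin]; apply/negP => hvM.
  have hU : X T e (M :|: R) by apply: hsup' hM (subsetUl _ _).
  have := hcl _ hU.
  have -> : symdiff (M :|: R) R = M :\: R.
    apply/setP => x; rewrite /symdiff !inE.
    by case: (x \in M); case: (x \in R).
  apply: hmin; rewrite properE subDset subsetUr /=.
  apply/subsetPn; exists v => //; by rewrite inE hvR.
- move=> hirr.
  have hcl : forall S, X T e S -> X T e (symdiff S R).
    move=> S hS.
    have [M [hM hMS]] := @ex_minimal X T e _ _ (leqnn #|S|) hS.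
    apply: hsup' hM.1 _; apply/subsetP => x hx.
    have hxR : x \notin R.
      by apply/negP => hxR; move: (hirr x hxR M hM); rewrite hx.
    by rewrite /symdiff !inE hxR (subsetP hMS x hx).
  split; first exact: hcl.
  split.
    move=> S1 S2 _ _ h; by rewrite -(@symdiffK _ S1 R) h symdiffK.
  split.
    move=> S2 h2; exists (symdiff S2 R); [exact: hcl | exact: symdiffK].
  move=> S1 S2 _ _; by rewrite /tar_adj symdiff2.
Qed.
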